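(* For the complete graph $K_n$, let $V(n)$ denote the number of distinct vertices visited by the random basic walk on $K_n$ (from any fixed starting vertex and initial port). Then, as $n\to\infty$, the expected value of $V(n)$ is asymptotically at least $(1-1/e)\,n$; that is, $\liminf_{n\to\infty} \mathbb{E}[V(n)]/n \ge 1-1/e$.
   Context: Each undirected edge $\{v,w\}$ is regarded as two arcs $v\to w$ and $w\to v$. A labeling of $K_n$ assigns, at each vertex $v$, the port numbers $1,\dots,n-1$ bijectively to the $n-1$ arcs leaving $v$ (labels on $v\to w$ and $w\to v$ need not agree). In a random labeling these bijections are chosen uniformly at random, independently for different vertices. Given a labeling, a starting vertex $v_0$ and an initial port $\ell$, the basic walk leaves $v_0$ along the arc labeled $\ell$; thereafter, whenever it enters a vertex $v$ along an arc whose label is $i$, it leaves $v$ along the arc out of $v$ labeled $(i \bmod (n-1))+1$. The random basic walk is the basic walk for a random labeling. *)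

(* Defs.v *)
From HB Require Import structures.
From mathcomp Require Import all_boot all_order all_algebra all_fingroup.
From mathcomp Require Import all_classical all_reals all_analysis.
Set Implicit Arguments. Unset Strict Implicit. Unset Printing Implicit Defensive.
Import Order.TTheory GRing.Theory Num.Theory.

(* Vertices of K_n are 'I_n; port numbers 1..n-1 are represented by elements
   of 'I_n with nonzero value.  A labeling assigns to each vertex v a
   permutation (L v) of 'I_n with (L v) v = 0: for w <> v, (L v) w is the port
   number (in 1..n-1) of the arc v -> w.  Such a permutation is exactly a
   bijection from the n-1 arcs leaving v onto {1,..,n-1}. *)
Definition labeling n := {ffun 'I_n -> {perm 'I_n}}.

Definition valid_labeling n (L : labeling n) : bool :=
  [forall v, nat_of_ord (L v v) == 0].

Definition labelings n : {set labeling n} := [set L | valid_labeling L].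

(* next port: i |-> (i mod (n-1)) + 1, as an element of 'I_n
   (the default i is never used when n >= 2). *)
Definition next_port n (i : 'I_n) : 'I_n := insubd i ((i %% n.-1).+1).

(* State of the walk: (current vertex, label of the arc just traversed). *)
Definition walk_step n (L : labeling n) (s : 'I_n * 'I_n) : 'I_n * 'I_n :=
  let j := next_port s.2 in ((L s.1)^-1%g j, j).

Definition walk_start n (L : labeling n) (v0 l : 'I_n) : 'I_n * 'I_n :=
  ((L v0)^-1%g l, l).

Definition visited n (L : labeling n) (v0 l : 'I_n) : {set 'I_n} :=
  v0 |: [set v | [exists i : 'I_n,
                    fconnect (walk_step L) (walk_start L v0 l) (v, i)]].

(* E[V(n)] for the uniformly random labeling *)
Definition expected_visited (R : realType) n (v0 l : 'I_n) : R :=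
  ((\sum_(L in labelings n) (#|visited L v0 l|)%:R) / (#|labelings n|)%:R)%R.

(* Main.v *)
Require Import Defs.
From HB Require Import structures.
From mathcomp Require Import all_boot all_order all_algebra all_fingroup.
From mathcomp Require Import all_classical all_reals all_analysis.
From mathcomp Require Import zify.
Import Order.TTheory GRing.Theory Num.Theory.
Set Implicit Arguments. Unset Strict Implicit. Unset Printing Implicit Defensive.

Definition port (m : nat) (l : 'I_m.+2) (k : nat) : 'I_m.+2 :=
  iter k (@next_port m.+2) l.

Fixpoint vert (m : nat) (L : labeling m.+2) (v0 l : 'I_m.+2) (k : nat)
  : 'I_m.+2 :=
  match k with
  | 0 => v0
  | k'.+1 => ((L (vert L v0 l k'))^-1)%g (port l k')
  end.

Fixpoint vset (m : nat) (L : labeling m.+2) (v0 l : 'I_m.+2) (k : nat)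
  : {set 'I_m.+2} :=
  match k with
  | 0 => [set v0]
  | k'.+1 => vert L v0 l k'.+1 |: vset L v0 l k'
  end.

Lemma iter_walk m (L : labeling m.+2) v0 l k :
  iter k (walk_step L) (walk_start L v0 l) = (vert L v0 l k.+1, port l k).
Proof.
elim: k => [|k IH] //=.
by rewrite IH /walk_step /=.
Qed.

Lemma vset_mem m (L : labeling m.+2) v0 l k x :
  (x \in vset L v0 l k) = [exists j : 'I_k.+1, vert L v0 l j == x].
Proof.
elim: k => [|k IH] /=.
  rewrite inE; apply/eqP/existsP => [->|[j /eqP <-]]; first by exists ord0.
  by rewrite (ord1 j).
rewrite !inE IH; apply/orP/existsP => [[/eqP ->|/existsP [j /eqP <-]]|[j /eqP <-]].
- by exists ord_max.
- by exists (widen_ord (leqnSn _) j).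
have [jk|jk] := ltnP j k.+1.
  by right; apply/existsP; exists (Ordinal jk).
have -> : nat_of_ord j = k.+1 by have := ltn_ord j; lia.
by left.
Qed.

Lemma vset_visited m (L : labeling m.+2) v0 l k :
  vset L v0 l k \subset visited L v0 l.
Proof.
apply/fintype.subsetP => x; rewrite vset_mem => /existsP [j /eqP <-].
rewrite /visited; case: (nat_of_ord j) => [|i]; first by rewrite setU11.
apply/setU1P; right; rewrite inE; apply/existsP; exists (port l i).
by rewrite -iter_walk fconnect_iter.
Qed.

Lemma port_val m (l : 'I_m.+2) (hl : 0 < l) k :
  nat_of_ord (port l k) = ((l.-1 + k) %% m.+1).+1.
Proof.
elim: k => [|k IH].
  rewrite addn0 modn_small; last by have := ltn_ord l; lia.
  by rewrite /port /=; lia.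
rewrite /port iterS -/(port l k) /next_port val_insubd IH /=.
have -> : ((l.-1 + k) %% m.+1).+1 %% m.+1 = (l.-1 + k.+1) %% m.+1.
  by rewrite -addn1 modnDml addn1 addnS.
by rewrite ltnS ltn_pmod.
Qed.

Lemma port_neq0 m (l : 'I_m.+2) (hl : 0 < l) k : nat_of_ord (port l k) != 0.
Proof. by rewrite port_val. Qed.

Lemma port_inj m (l : 'I_m.+2) (hl : 0 < l) j k :
  j < k -> k < m.+1 -> port l j != port l k.
Proof.
move=> jk km; apply/negP => /eqP /(congr1 val); rewrite /= !port_val //.
move=> [] /eqP; rewrite eqn_modDl !modn_small; lia.
Qed.
Definition swapL m (L : labeling m.+2) (u p q : 'I_m.+2) : labeling m.+2 :=
  [ffun v => if v == u then (L v * tperm p q)%g else L v].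

Definition okq m (L : labeling m.+2) v0 l k (q : 'I_m.+2) : bool :=
  (nat_of_ord q != 0) &&
  [forall j : 'I_k, (vert L v0 l j == vert L v0 l k) ==> (port l j != q)].

Definition Tq m (L : labeling m.+2) v0 l k q : labeling m.+2 :=
  if okq L v0 l k q then swapL L (vert L v0 l k) (port l k) q else L.

Lemma vert_swap m (L : labeling m.+2) (v0 l : 'I_m.+2) (k : nat) (q : 'I_m.+2) (hl : 0 < l) :
  okq L v0 l k q -> k < m.+1 ->
  forall j, j <= k -> vert (swapL L (vert L v0 l k) (port l k) q) v0 l j = vert L v0 l j.
Proof.
move=> /andP [_ /forallP ok] km; elim => [|j IH] //= jk.
rewrite IH ?(ltnW jk) // ffunE.
case: eqP => [e|] //.
rewrite invMg permM tpermV tpermD //.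
  by rewrite eq_sym port_inj.
by have := ok (Ordinal jk); rewrite /= e eqxx /= eq_sym.
Qed.

Lemma okq_swap m (L : labeling m.+2) (v0 l : 'I_m.+2) (k : nat) (q : 'I_m.+2) (hl : 0 < l) :
  okq L v0 l k q -> k < m.+1 ->
  okq (swapL L (vert L v0 l k) (port l k) q) v0 l k q.
Proof.
move=> ok km; have := ok; move=> /andP [q0 /forallP okj].
apply/andP; split => //; apply/forallP => j.
by rewrite !vert_swap // ?(ltnW (ltn_ord j)).
Qed.

Lemma Tq_inv m (L : labeling m.+2) (v0 l : 'I_m.+2) (k : nat) (q : 'I_m.+2) (hl : 0 < l) : k < m.+1 ->
  Tq (Tq L v0 l k q) v0 l k q = L.
Proof.
move=> km; case ok: (okq L v0 l k q); last by rewrite /Tq ok ok.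
rewrite {2}/Tq ok /Tq okq_swap // vert_swap //.
apply/ffunP => v; rewrite !ffunE; case: eqP => // ->.
by rewrite -mulgA tperm2 mulg1.
Qed.

Lemma Tq_valid m (L : labeling m.+2) (v0 l : 'I_m.+2) (k : nat) (q : 'I_m.+2) (hl : 0 < l) :
  L \in labelings m.+2 -> Tq L v0 l k q \in labelings m.+2.
Proof.
rewrite /Tq; case ok: (okq L v0 l k q) => //.
rewrite !inE /valid_labeling => /forallP h; apply/forallP => v.
rewrite /swapL ffunE; case: (v =P vert L v0 l k) => [->|_]; last exact: h; rewrite permM.
move: ok => /andP [q0 _].
have /eqP h0 := h (vert L v0 l k).
have hp : port l k != L (vert L v0 l k) (vert L v0 l k).
  by apply/eqP => e; move: (port_neq0 hl k); rewrite e h0.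
have hq : q != L (vert L v0 l k) (vert L v0 l k).
  by apply/eqP => e; move: q0; rewrite e h0.
by rewrite tpermD // h0.
Qed.

Lemma Tq_valid_iff m (L : labeling m.+2) (v0 l : 'I_m.+2) (k : nat) (q : 'I_m.+2) (hl : 0 < l) : k < m.+1 ->
  (Tq L v0 l k q \in labelings m.+2) = (L \in labelings m.+2).
Proof.
move=> km; apply/idP/idP; last exact: Tq_valid.
by move=> /(@Tq_valid _ _ v0 l k q hl); rewrite Tq_inv.
Qed.

Lemma vert_Tq_next m (L : labeling m.+2) (v0 l : 'I_m.+2) (k : nat) (q : 'I_m.+2) (hl : 0 < l) :
  okq L v0 l k q -> k < m.+1 ->
  vert (Tq L v0 l k q) v0 l k.+1 = ((L (vert L v0 l k))^-1)%g q.
Proof.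
move=> ok km; rewrite /Tq ok /= vert_swap // ffunE eqxx.
by rewrite invMg permM tpermV tpermL.
Qed.

Lemma vset_eq m (L L' : labeling m.+2) v0 l k :
  (forall j, j <= k -> vert L v0 l j = vert L' v0 l j) ->
  vset L v0 l k = vset L' v0 l k.
Proof.
elim: k => [|k IH] h; first by [].
change (vert L v0 l k.+1 |: vset L v0 l k = vert L' v0 l k.+1 |: vset L' v0 l k).
by rewrite h // IH // => j jk; apply: h; apply: ltnW.
Qed.

Lemma vset_Tq m (L : labeling m.+2) (v0 l : 'I_m.+2) (k : nat) (q : 'I_m.+2) (hl : 0 < l) : k < m.+1 ->
  vset (Tq L v0 l k q) v0 l k = vset L v0 l k.
Proof.
move=> km; rewrite /Tq; case ok: (okq L v0 l k q) => //.
by apply: vset_eq => j jk; rewrite vert_swap.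
Qed.

Definition gnew m (L : labeling m.+2) (v0 l : 'I_m.+2) k : nat :=
  vert L v0 l k.+1 \notin vset L v0 l k.

Lemma f_step m (L : labeling m.+2) (v0 l : 'I_m.+2) k :
  #|~: vset L v0 l k| = gnew L v0 l k + #|~: vset L v0 l k.+1|.
Proof.
rewrite /gnew.
change (vset L v0 l k.+1) with (vert L v0 l k.+1 |: vset L v0 l k).
have h1 := cardsC (vset L v0 l k); have h2 := cardsC (vert L v0 l k.+1 |: vset L v0 l k).
have h3 := cardsU1 (vert L v0 l k.+1) (vset L v0 l k).
rewrite card_ord in h1; rewrite card_ord in h2.
move: h1 h2 h3.
set b := (_ \notin _); set c1 := #|vset _ _ _ _|; set c2 := #|~: vset _ _ _ _|.
set c3 := #|_ |: _|; set c4 := #|~: (_ |: _)|.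
lia.
Qed.

Lemma vert_in_vset m (L : labeling m.+2) (v0 l : 'I_m.+2) j k :
  j <= k -> vert L v0 l j \in vset L v0 l k.
Proof.
move=> jk; rewrite vset_mem; apply/existsP.
have jk' : j < k.+1 by [].
by exists (Ordinal jk').
Qed.

Lemma pointwise m (L : labeling m.+2) (v0 l : 'I_m.+2) k (hl : 0 < l) :
  L \in labelings m.+2 -> k < m.+1 ->
  #|~: vset L v0 l k| <= \sum_(q | q != ord0) gnew (Tq L v0 l k q) v0 l k.
Proof.
move=> Lv km.
set u := vert L v0 l k; set s := L u.
pose Q := [set q | okq L v0 l k q && (gnew (Tq L v0 l k q) v0 l k != 0)].
have sub : [set s w | w in ~: vset L v0 l k] \subset Q.
  apply/fintype.subsetP => x /imsetP [w]; rewrite inE => wn xe; subst x.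
  have okw : okq L v0 l k (s w).
    apply/andP; split.
      apply/negP => /eqP sw0.
      move: Lv; rewrite inE => /forallP /(_ u) /eqP su0.
      have : s w = s u by apply: val_inj; rewrite /= sw0 su0.
      move/perm_inj => e; move: wn; rewrite e /u vert_in_vset //.
    apply/forallP => j; apply/implyP => /eqP vj; apply/negP => /eqP pj.
    move: wn; rewrite (_ : w = vert L v0 l j.+1) ?vert_in_vset //=.
    by rewrite vj -/u -/s pj permK.
  rewrite inE okw /= /gnew vert_Tq_next // -/u -/s permK vset_Tq //.
  by rewrite wn.
have c1 : #|~: vset L v0 l k| = #|[set s w | w in ~: vset L v0 l k]|.
  by rewrite card_imset //; exact: perm_inj.
rewrite c1 (leq_trans (subset_leq_card sub)) //.
rewrite -sum1_card big_mkcond [X in _ <= X]big_mkcond /=.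
apply: leq_sum => q _; rewrite inE.
case/boolP: (okq L v0 l k q && (gnew (Tq L v0 l k q) v0 l k != 0)) => // /andP [/andP [q0 _] g1].
have -> : q != ord0 by apply/negP => /eqP e; move: q0; rewrite e.
by move: g1; case: (gnew _ _ _ _).
Qed.

Lemma sum_Tq m (v0 l : 'I_m.+2) k (q : 'I_m.+2) (hl : 0 < l) (F : labeling m.+2 -> nat) :
  k < m.+1 ->
  \sum_(L in labelings m.+2) F (Tq L v0 l k q) = \sum_(L in labelings m.+2) F L.
Proof.
move=> km.
have inj : injective (fun L => Tq L v0 l k q).
  by apply: (can_inj (g := fun L => Tq L v0 l k q)) => L; apply: Tq_inv.
rewrite [RHS](reindex_inj inj) /=.
by apply: eq_bigl => L; rewrite Tq_valid_iff.
Qed.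

Lemma step_ineq m (v0 l : 'I_m.+2) k (hl : 0 < l) : k < m.+1 ->
  (\sum_(L in labelings m.+2) #|~: vset L v0 l k.+1|) * m.+1 <=
  (\sum_(L in labelings m.+2) #|~: vset L v0 l k|) * m.
Proof.
move=> km.
have H1 : \sum_(L in labelings m.+2) #|~: vset L v0 l k| =
  \sum_(L in labelings m.+2) gnew L v0 l k + \sum_(L in labelings m.+2) #|~: vset L v0 l k.+1|.
  by rewrite -big_split; apply: eq_bigr => L _; exact: f_step.
have H2 : \sum_(L in labelings m.+2) #|~: vset L v0 l k| <=
   m.+1 * \sum_(L in labelings m.+2) gnew L v0 l k.
  apply: (@leq_trans (\sum_(L in labelings m.+2) \sum_(q | q != ord0) gnew (Tq L v0 l k q) v0 l k)).
    by apply: leq_sum => L Lv; apply: pointwise.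
  rewrite exchange_big /=.
  rewrite (eq_bigr (fun _ => \sum_(L in labelings m.+2) gnew L v0 l k)); last first.
    by move=> q _; rewrite (@sum_Tq _ v0 l k q hl (fun L => gnew L v0 l k) km).
  by rewrite sum_nat_const cardC1 card_ord.
rewrite H1 in H2 *; nia.
Qed.

Lemma card_vset0 m (L : labeling m.+2) (v0 l : 'I_m.+2) :
  #|~: vset L v0 l 0| = m.+1.
Proof. change (#|~: [set v0]| = m.+1); have := cardsC [set v0]; rewrite cards1 card_ord; lia. Qed.

Lemma iter_ineq m (v0 l : 'I_m.+2) (hl : 0 < l) k : k <= m.+1 ->
  (\sum_(L in labelings m.+2) #|~: vset L v0 l k|) * m.+1 ^ k <=
  (#|labelings m.+2| * m.+1) * m ^ k.
Proof.
elim: k => [|k IH] km.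
  rewrite !expn0 !muln1 (eq_bigr (fun _ => m.+1)); last by move=> L _; apply: card_vset0.
  by rewrite sum_nat_const.
have := step_ineq v0 hl km; have := IH (ltnW km).
set a := \sum_(L in _) _; set b := \sum_(L in _) _.
rewrite !expnS => h1 h2.
apply: (@leq_trans (a * m * m.+1 ^ k)).
  by rewrite mulnA leq_mul2r h2 orbT.
rewrite mulnAC (mulnC m (m ^ k)) mulnA.
by apply: leq_mul.
Qed.

Lemma visited_bound m (v0 l : 'I_m.+2) :
  #|labelings m.+2| * m.+2 <=
  \sum_(L in labelings m.+2) #|visited L v0 l| +
  \sum_(L in labelings m.+2) #|~: vset L v0 l m.+1|.
Proof.
rewrite -big_split -sum_nat_const; apply: leq_sum => L _.
change (m.+2 <= #|visited L v0 l| + #|~: vset L v0 l m.+1|).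
have h1 := cardsC (vset L v0 l m.+1); rewrite card_ord in h1.
have h2 := subset_leq_card (vset_visited L v0 l m.+1).
move: h1 h2; set A := vset L v0 l m.+1; set c1 := #|A|; set c2 := #|~: A|.
set c3 := #|visited _ _ _|; lia.
Qed.

Lemma labelings_gt0 m : 0 < #|labelings m.+2|.
Proof.
apply/card_gt0P; exists [ffun v => tperm v ord0].
rewrite inE; apply/forallP => v; by rewrite ffunE tpermL.
Qed.

From mathcomp Require Import ring lra.
Local Open Scope ring_scope.

Lemma real_bound (R : realType) (m N S A : nat) : (0 < N)%N ->
  (N * m.+2 <= S + A)%N -> (A * m.+1 ^ m.+1 <= N * m.+1 * m ^ m.+1)%N ->
  ((1 - expR (-1)) <= (S%:R / N%:R) / (m.+2)%:R :> R)%R.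
Proof.
move=> N0 h1 h2.
have n1pos : (0 < (m.+1)%:R :> R)%R by rewrite ltr0n.
set n1 : R := (m.+1)%:R.
set x : R := (m%:R / n1)%R.
have hx0 : (0 <= x)%R by rewrite /x divr_ge0 // ltW.
have hxe : (x <= expR (- n1^-1))%R.
  have -> : x = (1 + - n1^-1)%R.
    rewrite /x /n1 -natr1; field.
    by rewrite natr1 -/n1 lt0r_neq0.
  exact: expR_ge1Dx.
have hpow : (x ^+ m.+1 <= expR (-1))%R.
  apply: (le_trans (lerXn2r _ _ _ hxe)); rewrite ?nnegrE ?expR_ge0 //.
  by rewrite -expRM_natr -/n1 mulNr mulVf ?lt0r_neq0.
have ha : (A%:R <= N%:R * n1 * x ^+ m.+1 :> R)%R.
  have h2' : (A%:R * n1 ^+ m.+1 <= N%:R * n1 * (m%:R) ^+ m.+1 :> R)%R.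
    by rewrite /n1 -!natrX -!natrM ler_nat.
  rewrite /x expr_div_n mulrA ler_pdivlMr ?exprn_gt0 //.
have h1' : ((N * m.+2)%:R <= S%:R + A%:R :> R)%R by rewrite -natrD ler_nat.
rewrite natrM in h1'.
have Npos : (0 < N%:R :> R)%R by rewrite ltr0n.
have e0 : (0 <= expR (-1) :> R)%R by apply: expR_ge0.
have hn : (n1 <= (m.+2)%:R :> R)%R by rewrite ler_nat.
have hm2 : (0 < (m.+2)%:R :> R)%R by rewrite ltr0n.
have k1 : (N%:R * n1 * x ^+ m.+1 <= N%:R * (m.+2)%:R * expR (-1) :> R)%R.
  apply: ler_pM.
  - by nra.
  - by apply: exprn_ge0.
  - by nra.
  - exact: hpow.
rewrite ler_pdivlMr // ler_pdivlMr //.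
move: h1' ha k1; set a := (A%:R : R); set s := (S%:R : R); set nN := (N%:R : R).
set e := expR (-1 : R); set mm := ((m.+2)%:R : R); set y := N%:R * n1 * x ^+ m.+1.
move=> h1' ha k1.
nra.
Qed.

Lemma einf_ge (R : realType) (u : (\bar R)^nat) (c : \bar R) :
  (forall n, (c <= u n)%E) -> (c <= limn_einf u)%E.
Proof.
move=> h; rewrite limn_einf_lim; apply: lime_ge; first exact: is_cvg_einfs.
by apply: nearW => n; apply: le_ereal_inf_tmp => _ [k _ <-]; exact: h.
Qed.

Theorem theorem5p1 (R : realType)
    (v0 : forall n : nat, 'I_n.+2) (l : forall n : nat, 'I_n.+2)
    (hl : forall n, (0 < nat_of_ord (l n))%N) :
  ((1 - expR (-1)) %:E <=
   limn_einf (fun n : nat =>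
     (expected_visited R (v0 n) (l n) / (n.+2)%:R)%:E))%E.
Proof.
apply: einf_ge => n; rewrite lee_fin /expected_visited -natr_sum.
apply: real_bound.
- exact: labelings_gt0.
- exact: visited_bound.
- exact: iter_ineq.
Qed.
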